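(* Let $m,n\ge 3$ be integers. The direct product $C_m\times C_n$ is a distance magic graph if and only if $n=4$, or $m=4$, or $m\equiv n\equiv 0\pmod 4$. Moreover, $C_m\times C_n$ is a balanced distance magic graph if and only if $n=4$ or $m=4$.
   Context: All graphs are finite and simple; $C_n$ denotes the cycle on $n$ vertices. For a graph $G$ and vertex $x$, $N(x)$ is the (open) neighborhood of $x$. A distance magic labeling of a graph $G$ of order $N$ is a bijection $\ell\colon V(G)\to\{1,\dots,N\}$ for which there is a constant $k$ such that $\sum_{y\in N(x)}\ell(y)=k$ for every $x\in V(G)$; $G$ is distance magic if it admits such a labeling. A balanced distance magic labeling of a graph with an even number $N$ of vertices is a distance magic labeling $\ell$ such that for every vertex $w$: whenever $u\in N(w)$ has $\ell(u)=i$, there is $v\in N(w)$ with $\ell(v)=N+1-i$; a graph is balanced distance magic if it has an even number of vertices and admits such a labeling. The direct product $G\times H$ has vertex set $V(G)\times V(H)$, with $(g,h)$ adjacent to $(g',h')$ iff $gg'\in E(G)$ and $hh'\in E(H)$. *)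

(* Defs.v *)
From mathcomp Require Import all_boot.
Set Implicit Arguments. Unset Strict Implicit. Unset Printing Implicit Defensive.

(* A graph is a vertex finType T with an adjacency relation e (symmetric,
   irreflexive for the graphs considered here). *)

(* The cycle C_n on vertex set 'I_n: i ~ j iff j = i+1 mod n or i = j+1 mod n.
   For n >= 3 this is the simple n-cycle. *)
Definition cycle_adj (n : nat) : rel 'I_n :=
  fun i j => (j == (i.+1 %% n) :> nat) || (i == (j.+1 %% n) :> nat).

Definition direct_prod (T1 T2 : finType) (e1 : rel T1) (e2 : rel T2)
  : rel (T1 * T2) :=
  fun x y => e1 x.1 y.1 && e2 x.2 y.2.

(* A distance magic labeling: a bijection l : V -> {1,...,N}, where N = #|V|,
   represented as a bijection l : V -> 'I_N with label (l x).+1, such that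
   the sum of labels over the open neighbourhood is a constant k. *)
Definition label (T : finType) (l : T -> 'I_#|T|) (x : T) : nat := (l x).+1.

Definition is_distance_magic_labeling (T : finType) (e : rel T)
  (l : T -> 'I_#|T|) : Prop :=
  bijective l /\
  exists k : nat, forall x : T, \sum_(y | e x y) label l y = k.

Definition distance_magic (T : finType) (e : rel T) : Prop :=
  exists l : T -> 'I_#|T|, is_distance_magic_labeling e l.

Definition is_balanced_distance_magic_labeling (T : finType) (e : rel T)
  (l : T -> 'I_#|T|) : Prop :=
  is_distance_magic_labeling e l /\
  forall w u : T, e w u ->
    exists v : T, e w v /\ label l v = #|T|.+1 - label l u.

Definition balanced_distance_magic (T : finType) (e : rel T) : Prop :=
  ~~ odd #|T| /\ exists l : T -> 'I_#|T|, is_balanced_distance_magic_labeling e l.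

(* Main.v *)
Require Import Defs.
From mathcomp Require Import all_boot zify.
Set Implicit Arguments. Unset Strict Implicit. Unset Printing Implicit Defensive.

Lemma adjE m (a b : 'I_m) : cycle_adj a b = (b == ordS a) || (b == ord_pred a).
Proof.
rewrite /cycle_adj.
have -> : (val a == (val b).+1 %% m) = (b == ord_pred a).
  apply/idP/idP => /eqP h.
    apply/eqP; apply: (@ordS_inj m); rewrite ord_predK; apply: val_inj; exact: esym.
  by rewrite h -[X in val X](@ord_predK m a).
done.
Qed.

Lemma val_iter m (x : 'I_m) t : val (iter t (@ordS m) x) = (x + t) %% m.
Proof.
elim: t => [|t IH] /=; first by rewrite addn0 modn_small.
by rewrite IH -addn1 modnDml -addnA addn1 addnS.
Qed.

Lemma valS m (a : 'I_m) : (a.+1 < m /\ (ordS a : nat) = a.+1) \/ (a.+1 = m /\ (ordS a : nat) = 0).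
Proof.
rewrite /=. case: (ltnP a.+1 m) => h; first by left; rewrite modn_small.
right; have e : a.+1 = m by apply/eqP; rewrite eqn_leq h ltn_ord.
by rewrite e modnn.
Qed.

Lemma valP m (a : 'I_m) : (0 < a /\ (ord_pred a : nat) = a.-1) \/ ((a : nat) = 0 /\ (ord_pred a : nat) = m.-1).
Proof.
have := valS (ord_pred a); rewrite ord_predK.
have := ltn_ord (ord_pred a); have := ltn_ord a. lia.
Qed.

Lemma iter4_eq m (a : 'I_m) : 3 <= m -> val (iter 4 (@ordS m) a) = a -> m = 4.
Proof.
move=> hm; rewrite val_iter => h.
have : (a + 4 == a + 0 %[mod m]) by rewrite h addn0 modn_small.
rewrite eqn_modDl mod0n => /eqP h4.
have hd : m %| 4 by rewrite /dvdn h4.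
have := dvdn_leq (isT : 0 < 4) hd.
case: m hm hd {a h h4} => [|[|[|[|[|m]]]]] //.
Qed.

Lemma sum1 m (F : 'I_m -> nat) (a : 'I_m) : 3 <= m ->
  \sum_(b | cycle_adj a b) F b = F (ord_pred a) + F (ordS a).
Proof.
move=> hm.
have hne : ordS a != ord_pred a.
  apply/eqP => /(congr1 (@nat_of_ord m)) => e.
  have := valS a; have := valP a; have := ltn_ord a.
  move: e; move: (nat_of_ord (ordS a)) (nat_of_ord (ord_pred a)) (nat_of_ord a) => x y z. lia.
rewrite (bigD1 (ordS a)) /=; last by rewrite adjE eqxx.
rewrite (bigD1 (ord_pred a)) /=; last by rewrite adjE eqxx orbT eq_sym.
rewrite big_pred0; first by rewrite addn0 addnC.
move=> i; rewrite adjE; case: (i =P ordS a) => //= _; case: (i =P ord_pred a) => //.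
Qed.

Lemma sum2 m n (F : 'I_m * 'I_n -> nat) (x : 'I_m * 'I_n) : 3 <= m -> 3 <= n ->
  \sum_(y | direct_prod (@cycle_adj m) (@cycle_adj n) x y) F y =
  (F (ord_pred x.1, ord_pred x.2) + F (ord_pred x.1, ordS x.2)) +
  (F (ordS x.1, ord_pred x.2) + F (ordS x.1, ordS x.2)).
Proof.
move=> hm hn.
transitivity (\sum_(p | cycle_adj x.1 p.1 && cycle_adj x.2 p.2) (fun a b => F (a, b)) p.1 p.2).
  by apply: eq_bigr => -[].
rewrite -(pair_big (cycle_adj x.1) (cycle_adj x.2) (fun a b => F (a, b))) /=.
rewrite sum1 // sum1 // sum1 //.
Qed.

Lemma exists_t m : ~~ (4 %| m) -> exists t c, 4 * t = c * m + 2.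
Proof.
rewrite /dvdn => hd.
have hq := divn_eq m 4; have hr : m %% 4 < 4 := ltn_pmod m (isT : 0 < 4).
move: hq hr hd; move: (m %/ 4) (m %% 4) => q [|[|[|[|r]]]] //= hq _ _.
- by exists (2 * q + 1), 2; lia.
- by exists (q + 1), 1; lia.
- by exists (2 * q + 2), 2; lia.
Qed.

Lemma core m n (L : 'I_m -> 'I_n -> nat) k : 3 <= m -> 3 <= n ->
 (forall a b b', L a b = L a b' -> b = b') ->
 (forall i j, (L (ord_pred i) (ord_pred j) + L (ord_pred i) (ordS j)) +
              (L (ordS i) (ord_pred j) + L (ordS i) (ordS j)) = k) ->
 ~~ (4 %| m) -> n = 4.
Proof.
move=> hm hn hinj HS h4.
pose G a b := L a (ord_pred b) + L a (ordS b).
have HG : forall a b, G a b + G (ordS (ordS a)) b = k.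
  by move=> a b; have := HS (ordS a) b; rewrite ordSK.
have H4 : forall a b, G (iter 4 (@ordS m) a) b = G a b.
  move=> a b; have := HG a b; have := HG (ordS (ordS a)) b; rewrite /=; lia.
have Ht : forall t a b, G (iter (4 * t) (@ordS m) a) b = G a b.
  elim=> [|t IH] a b //; by rewrite mulnS iterD H4 IH.
have [t [c htc]] := exists_t h4.
have H2 : forall a b, G (ordS (ordS a)) b = G a b.
  move=> a b; rewrite -(Ht t a b); congr G; apply: val_inj.
  rewrite val_iter htc addnCA modnMDl -(val_iter a 2) //.
have Gc : forall a b, G a b + G a b = k by move=> a b; rewrite -{2}H2 HG.
pose a0 : 'I_m := Ordinal (leq_trans (isT : 0 < 3) hm).
pose b0 : 'I_n := Ordinal (leq_trans (isT : 0 < 3) hn).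
have e1 := Gc a0 (ordS b0); have e2 := Gc a0 (ordS (ordS (ordS b0))).
rewrite /G !ordSK in e1 e2.
have e : L a0 b0 = L a0 (iter 4 (@ordS n) b0) by rewrite /=; lia.
have := hinj _ _ _ e => eb.
apply: (iter4_eq (a := b0)) => //; by rewrite -eb.
Qed.

Lemma DM_core m n : 3 <= m -> 3 <= n ->
  distance_magic (direct_prod (@cycle_adj m) (@cycle_adj n)) ->
  (~~ (4 %| m) -> n = 4) /\ (~~ (4 %| n) -> m = 4).
Proof.
move=> hm hn [l [hb [k hk]]].
have linj : forall x y, label l x = label l y -> x = y.
  by move=> x y; rewrite /label => -[] /val_inj /(bij_inj hb).
split.
- apply: (@core m n (fun a b => label l (a, b)) k) => //.
    by move=> a b b' /linj [].
  by move=> i j; have := hk (i, j); rewrite sum2.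
- apply: (@core n m (fun b a => label l (a, b)) k) => //.
    by move=> a b b' /linj [].
  by move=> i j; have := hk (j, i); rewrite sum2 //= => <-; lia.
Qed.

Lemma DM_of m n (L : 'I_m -> 'I_n -> nat) k : 3 <= m -> 3 <= n ->
  (forall a b, L a b < m * n) ->
  (forall a b a' b', L a b = L a' b' -> a = a' /\ b = b') ->
  (forall i j, (L (ord_pred i) (ord_pred j) + L (ord_pred i) (ordS j)) +
              (L (ordS i) (ord_pred j) + L (ordS i) (ordS j)) = k) ->
  distance_magic (direct_prod (@cycle_adj m) (@cycle_adj n)) /\
  (~~ odd (m * n) ->
  (forall a b, exists a' b', L a' b' + L a b = (m * n).-1 /\
      (forall x, cycle_adj x a -> cycle_adj x a') /\
      (forall y, cycle_adj y b -> cycle_adj y b')) ->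
  balanced_distance_magic (direct_prod (@cycle_adj m) (@cycle_adj n))).
Proof.
move=> hm hn hL hinj HS.
have hc : #|{: ('I_m * 'I_n)%type}| = m * n by rewrite card_prod !card_ord.
have hlt : forall x : 'I_m * 'I_n, L x.1 x.2 < #|{: ('I_m * 'I_n)%type}| by move=> x; rewrite hc.
pose l := fun x => Ordinal (hlt x).
have hl : is_distance_magic_labeling (direct_prod (@cycle_adj m) (@cycle_adj n)) l.
  split.
    apply: inj_card_bij; last by rewrite card_ord.
    move=> [a b] [a' b'] /(congr1 val) /= /hinj [-> ->] //.
  exists (k + 4) => x; rewrite sum2 // /label /=.
  by case: x => a b; have := HS a b; rewrite /=; lia.
split; first by exists l.
move=> hodd HB; split; first by rewrite hc.
exists l; split => // w [a b] /andP [h1 h2].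
have [a' [b' [e [ha hb]]]] := HB a b.
exists (a', b'); split; first by rewrite /direct_prod /= ha // hb.
rewrite /label /= hc.
have := hL a b; lia.
Qed.

Lemma onecoord m (a c : 'I_m) : 3 <= m -> m <> 4 ->
  cycle_adj (ordS a) c -> cycle_adj (ord_pred a) c -> c = a.
Proof.
move=> hm hm4; rewrite !adjE ordSK ord_predK.
case/orP => /eqP h1 //; case/orP => /eqP h2 //.
exfalso; apply: hm4; apply: (iter4_eq (a := a)) => //.
have -> : iter 4 (@ordS m) a = ordS (ordS c) by rewrite h1.
by rewrite h2 !ord_predK.
Qed.

Lemma notBal m n : 3 <= m -> 3 <= n -> m <> 4 -> n <> 4 ->
  ~ balanced_distance_magic (direct_prod (@cycle_adj m) (@cycle_adj n)).
Proof.
move=> hm hn hm4 hn4 [hodd [l [[hb _] hbal]]].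
pose a : 'I_m := Ordinal (leq_trans (isT : 0 < 3) hm).
pose b : 'I_n := Ordinal (leq_trans (isT : 0 < 3) hn).
have e1 : direct_prod (@cycle_adj m) (@cycle_adj n) (ordS a, ordS b) (a, b).
  by rewrite /direct_prod /= !adjE !ordSK !eqxx !orbT.
have e2 : direct_prod (@cycle_adj m) (@cycle_adj n) (ord_pred a, ord_pred b) (a, b).
  by rewrite /direct_prod /= !adjE !ord_predK !eqxx.
have [v1 [f1 l1]] := hbal _ _ e1; have [v2 [f2 l2]] := hbal _ _ e2.
have : label l v1 = label l v2 by rewrite l1 l2.
rewrite /label => -[] /val_inj /(bij_inj hb) ev; subst v2.
clear l2; move: f1 f2 l1; case: v1 => c d /andP [/= f1a f1b] /andP [/= f2a f2b].
rewrite (onecoord hm hm4 f1a f2a) (onecoord hn hn4 f1b f2b) /label => hl.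
have hlt := ltn_ord (l (a, b)).
move: hodd hl hlt; move: (#|_|) (nat_of_ord (l (a, b))) => N x.
move=> hodd hl hlt.
have e : N.+1 = (x.+1).*2 by rewrite -addnn; lia.
by move: hodd; rewrite -[odd N]negbK -/(odd N.+1) e odd_double.
Qed.

Definition L4 p (a : 'I_p) (b : 'I_4) : nat :=
  match nat_of_ord b with 0 => nat_of_ord a | 1 => p + a | 2 => 4 * p - 1 - a | _ => 3 * p - 1 - a end.

Lemma L4_lt p a b : @L4 p a b < p * 4.
Proof. have := ltn_ord a; rewrite /L4; case: b => [[|[|[|[|b]]]] hb] //= ; lia. Qed.

Lemma L4_inj p a b a' b' : @L4 p a b = L4 a' b' -> a = a' /\ b = b'.
Proof.
have := ltn_ord a; have := ltn_ord a'; rewrite /L4.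
case: b => [[|[|[|[|b]]]] hb] //=; case: b' => [[|[|[|[|b']]]] hb'] //= h1 h2 e;
  (split; [apply: ord_inj; lia | apply: ord_inj => /=; lia]).
Qed.

Lemma L4_row p (a : 'I_p) (j : 'I_4) : L4 a (ord_pred j) + L4 a (ordS j) = 4 * p - 1.
Proof.
have := ltn_ord a; rewrite /L4.
case: j => [[|[|[|[|j]]]] hj] //= h; lia.
Qed.

Lemma L4_HS p (i : 'I_p) (j : 'I_4) :
  (L4 (ord_pred i) (ord_pred j) + L4 (ord_pred i) (ordS j)) +
  (L4 (ordS i) (ord_pred j) + L4 (ordS i) (ordS j)) = 2 * (4 * p - 1).
Proof. by rewrite !L4_row mul2n addnn. Qed.

Lemma L4_bal p (a : 'I_p) (b : 'I_4) :
  L4 a (ordS (ordS b)) + L4 a b = (p * 4).-1 /\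
  (forall y, cycle_adj y b -> cycle_adj y (ordS (ordS b))).
Proof.
split.
  have := ltn_ord a; rewrite /L4.
  case: b => [[|[|[|[|b]]]] hb] //= h; lia.
by case: b => [[|[|[|[|b]]]] hb] //; case => [[|[|[|[|y]]]] hy].
Qed.

Definition alpha (p s X : nat) := if s < 2 then X else p - 1 - X.
Definition tt (r s : nat) := if s < 2 then 4 * s + r else 15 - (4 * (s - 2) + r).

Lemma alpha_lt p s X : X < p -> alpha p s X < p.
Proof. rewrite /alpha; case: ifP; lia. Qed.

Lemma alpha_inj p s X X' : X < p -> X' < p -> alpha p s X = alpha p s X' -> X = X'.
Proof. rewrite /alpha; case: ifP; lia. Qed.

Lemma alpha_pair p s X : s < 4 -> X < p -> alpha p s X + alpha p ((s + 2) %% 4) X = p - 1.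
Proof. rewrite /alpha; case: s => [|[|[|[|s]]]] //=; lia. Qed.

Lemma tt_lt r s : r < 4 -> s < 4 -> tt r s < 16.
Proof. rewrite /tt; case: ifP; lia. Qed.

Lemma tt_inj r s r' s' : r < 4 -> s < 4 -> r' < 4 -> s' < 4 -> tt r s = tt r' s' -> r = r' /\ s = s'.
Proof. rewrite /tt; case: ifP; case: ifP; lia. Qed.

Lemma tt_sum r s : r < 4 -> s < 4 ->
  tt r s + tt r ((s + 2) %% 4) + tt ((r + 2) %% 4) s + tt ((r + 2) %% 4) ((s + 2) %% 4) = 30.
Proof. by case: r => [|[|[|[|r]]]] //; case: s => [|[|[|[|s]]]]. Qed.

Lemma mix d x y x' y' : y < d -> y' < d -> x * d + y = x' * d + y' -> x = x' /\ y = y'.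
Proof.
move=> h h' e.
have ey : y = y' by have := congr1 (modn^~ d) e; rewrite !modnMDl !modn_small.
subst y'; split => //.
have hd : 0 < d by lia.
by move/eqP: e; rewrite eqn_add2r eqn_mul2r => /orP [/eqP hd0| /eqP] //; lia.
Qed.

Lemma mod4ss m (x : 'I_m) : 4 %| m -> (ordS (ordS x) : nat) %% 4 = (x %% 4 + 2) %% 4.
Proof.
move=> h4; change (nat_of_ord (ordS (ordS x))) with (val (iter 2 (@ordS m) x)).
by rewrite val_iter modn_dvdm // modnDml.
Qed.

Definition LB m n (a : 'I_m) (b : 'I_n) : nat :=
  (n %/ 4 * alpha (m %/ 4) (b %% 4) (a %/ 4) + alpha (n %/ 4) (a %% 4) (b %/ 4)) * 16
  + tt (a %% 4) (b %% 4).

Lemma divlt m (a : 'I_m) : 4 %| m -> a %/ 4 < m %/ 4.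
Proof. move=> h; rewrite ltn_divLR // divnK //. Qed.

Lemma LB_lt m n (a : 'I_m) (b : 'I_n) : 4 %| m -> 4 %| n -> LB a b < m * n.
Proof.
move=> hm hn; rewrite /LB.
have hA := alpha_lt (b %% 4) (divlt a hm).
have hB := alpha_lt (a %% 4) (divlt b hn).
have hT := @tt_lt (a %% 4) (b %% 4) (ltn_pmod _ (isT : 0 < 4)) (ltn_pmod _ (isT : 0 < 4)).
have em := esym (divnK hm); have en := esym (divnK hn).
move: hA hB hT em en.
move: (alpha (m %/ 4) (b %% 4) (a %/ 4)) (alpha (n %/ 4) (a %% 4) (b %/ 4)) (tt (a %% 4) (b %% 4)) => A B C.
move: (m %/ 4) (n %/ 4) => p q.
nia.
Qed.

Lemma LB_inj m n (a a' : 'I_m) (b b' : 'I_n) : 4 %| m -> 4 %| n ->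
  LB a b = LB a' b' -> a = a' /\ b = b'.
Proof.
move=> hm hn; rewrite /LB => e.
have l4 : forall x, x %% 4 < 4 by move=> x; exact: ltn_pmod.
have [e1 e2] := mix (tt_lt (l4 a) (l4 b)) (tt_lt (l4 a') (l4 b')) e.
have [r1 s1] := tt_inj (l4 a) (l4 b) (l4 a') (l4 b') e2.
move: e1; rewrite ![n %/ 4 * _]mulnC => e1.
have [e3 e4] := mix (alpha_lt _ (divlt b hn)) (alpha_lt _ (divlt b' hn)) e1.
rewrite s1 in e3; rewrite r1 in e4.
have d1 := alpha_inj (divlt a hm) (divlt a' hm) e3.
have d2 := alpha_inj (divlt b hn) (divlt b' hn) e4.
split; apply: ord_inj; [rewrite (divn_eq a 4) (divn_eq a' 4) | rewrite (divn_eq b 4) (divn_eq b' 4)]; congruence.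
Qed.

Lemma LB_HS m n (i : 'I_m) (j : 'I_n) : 4 %| m -> 4 %| n ->
  (LB (ord_pred i) (ord_pred j) + LB (ord_pred i) (ordS j)) +
  (LB (ordS i) (ord_pred j) + LB (ordS i) (ordS j)) =
  ((n %/ 4 * (m %/ 4 - 1)) * 2 + (n %/ 4 - 1) * 2) * 16 + 30.
Proof.
move=> hm hn.
have -> : ordS i = ordS (ordS (ord_pred i)) by rewrite ord_predK.
have -> : ordS j = ordS (ordS (ord_pred j)) by rewrite ord_predK.
move: (ord_pred i) (ord_pred j) => u v.
have l4 : forall x, x %% 4 < 4 by move=> x; exact: ltn_pmod.
have hu := mod4ss u hm; have hv := mod4ss v hn.
have F1 := alpha_pair (l4 v) (divlt u hm); rewrite -hv in F1.
have F2 := alpha_pair (l4 v) (divlt (ordS (ordS u)) hm); rewrite -hv in F2.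
have F3 := alpha_pair (l4 u) (divlt v hn); rewrite -hu in F3.
have F4 := alpha_pair (l4 u) (divlt (ordS (ordS v)) hn); rewrite -hu in F4.
have F5 := tt_sum (l4 u) (l4 v); rewrite -hu -hv in F5.
rewrite /LB.
move: F1 F2 F3 F4 F5.
move: (alpha (m %/ 4) (v %% 4) (u %/ 4)) (alpha (m %/ 4) (ordS (ordS v) %% 4) (u %/ 4)) => A1 A2.
move: (alpha (m %/ 4) (v %% 4) (ordS (ordS u) %/ 4)) (alpha (m %/ 4) (ordS (ordS v) %% 4) (ordS (ordS u) %/ 4)) => A3 A4.
move: (alpha (n %/ 4) (u %% 4) (v %/ 4)) (alpha (n %/ 4) (ordS (ordS u) %% 4) (v %/ 4)) => B1 B2.
move: (alpha (n %/ 4) (u %% 4) (ordS (ordS v) %/ 4)) (alpha (n %/ 4) (ordS (ordS u) %% 4) (ordS (ordS v) %/ 4)) => B3 B4.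
move: (tt _ _) (tt _ _) (tt _ _) (tt _ _) (m %/ 4) (n %/ 4) => T1 T2 T3 T4 p q.
move=> F1 F2 F3 F4 F5.
nia.
Qed.

Theorem mainTheorem11 (m n : nat) (hm : 3 <= m) (hn : 3 <= n) :
  (distance_magic (direct_prod (@cycle_adj m) (@cycle_adj n)) <->
     [\/ n = 4, m = 4 | (m %% 4 = 0 /\ n %% 4 = 0)]) /\
  (balanced_distance_magic (direct_prod (@cycle_adj m) (@cycle_adj n)) <->
     n = 4 \/ m = 4).
Proof.
split; split.
- move=> hdm; have [h1 h2] := DM_core hm hn hdm.
  case: (boolP (4 %| m)) => dm; last by constructor 1; exact: h1.
  case: (boolP (4 %| n)) => dn; last by constructor 2; exact: h2.
  by constructor 3; split; apply/eqP.
- case => [hn4|hm4|[dm dn]].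
  + subst n.
    apply: (proj1 (DM_of (L := @L4 m) (k := 2 * (4 * m - 1)) hm hn _ _ _)).
    * exact: L4_lt.
    * exact: L4_inj.
    * exact: L4_HS.
  + subst m.
    apply: (proj1 (DM_of (L := fun a b => @L4 n b a) (k := 2 * (4 * n - 1)) hm hn _ _ _)).
    * by move=> a b; rewrite mulnC; exact: L4_lt.
    * by move=> a b a' b' /L4_inj [-> ->].
    * by move=> i j; have := L4_HS j i; lia.
  + have dm' : 4 %| m by rewrite /dvdn dm.
    have dn' : 4 %| n by rewrite /dvdn dn.
    apply: (proj1 (DM_of (L := @LB m n) (k := ((n %/ 4 * (m %/ 4 - 1)) * 2 + (n %/ 4 - 1) * 2) * 16 + 30) hm hn _ _ _)).
    * by move=> a b; exact: LB_lt.
    * by move=> a b a' b'; exact: LB_inj.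
    * by move=> i j; exact: LB_HS.
- move=> hb.
  case: (eqVneq n 4) => [->|hn4]; first by left.
  case: (eqVneq m 4) => [->|hm4]; first by right.
  by exfalso; apply: (notBal hm hn (elimN eqP hm4) (elimN eqP hn4)).
- case => h.
  + subst n.
    apply: (proj2 (DM_of (L := @L4 m) (k := 2 * (4 * m - 1)) hm hn _ _ _) _ _).
    * exact: L4_lt.
    * exact: L4_inj.
    * exact: L4_HS.
    * by rewrite oddM andbF.
    * move=> a b; exists a, (ordS (ordS b)); have [e h] := L4_bal a b.
      by split => //; split.
  + subst m.
    apply: (proj2 (DM_of (L := fun a b => @L4 n b a) (k := 2 * (4 * n - 1)) hm hn _ _ _) _ _).
    * by move=> a b; rewrite mulnC; exact: L4_lt.
    * by move=> a b a' b' /L4_inj [-> ->].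
    * by move=> i j; have := L4_HS j i; lia.
    * by rewrite oddM.
    * move=> a b; exists (ordS (ordS a)), b; have [e h] := L4_bal b a.
      by split; [rewrite mulnC | split].
Qed.
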